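(* For every $n\geqslant 1$, $|\mathcal{OCI}_n|=3\cdot 2^n-2n-2$.
   Context: Let $\Omega_n=\{1<2<\cdots<n\}$, $\mathcal{I}_n$ the symmetric inverse monoid on $\Omega_n$. Let $g$ be the permutation $ig=i+1$ ($1\leqslant i\leqslant n-1$), $ng=1$, $\mathcal{C}_n=\{1,g,\ldots,g^{n-1}\}$, and $\mathcal{CI}_n=\{\alpha\in\mathcal{I}_n\mid \alpha=\sigma|_{\mathrm{Dom}(\alpha)}\text{ for some }\sigma\in\mathcal{C}_n\}$. A partial injection $\alpha$ with domain $\{a_1<\cdots<a_t\}$ is order-preserving if $a_1\alpha\leqslant\cdots\leqslant a_t\alpha$. $\mathcal{OCI}_n$ is the set of all order-preserving elements of $\mathcal{CI}_n$ (including the empty transformation). *)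

(* Defs.v *)
(* Omega_n = {1<...<n} is modelled by 'I_n = {0<...<n-1}
   (order-isomorphic via i |-> i+1). *)
From mathcomp Require Import all_boot all_order.
Set Implicit Arguments. Unset Strict Implicit. Unset Printing Implicit Defensive.

Definition ptrans (n : nat) := {ffun 'I_n -> option 'I_n}.

Definition in_dom n (a : ptrans n) (i : 'I_n) : bool := a i != None.

Definition is_pinj n (a : ptrans n) : bool :=
  [forall i, forall j, (in_dom a i && (a i == a j)) ==> (i == j)].

Definition gpow (n : nat) (k : nat) (i : 'I_n) : nat := (i + k) %% n.

(* alpha is the restriction of some sigma in C_n = {1, g, ..., g^(n-1)} *)
Definition in_CI n (a : ptrans n) : bool :=
  is_pinj a &&
  [exists k : 'I_n, forall i, in_dom a i ==>
      (if a i is Some j then nat_of_ord j == gpow k i else false)].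

Definition order_pres n (a : ptrans n) : bool :=
  [forall i, forall j,
     [&& in_dom a i, in_dom a j & i < j] ==>
     (if a i is Some x then if a j is Some y then x <= y else false else false)].

Definition OCI (n : nat) : {set ptrans n} :=
  [set a : ptrans n | in_CI a && order_pres a].

(* Main.v *)
Require Import Defs.
From mathcomp Require Import all_boot all_order.
From mathcomp Require Import zify.
Set Implicit Arguments. Unset Strict Implicit. Unset Printing Implicit Defensive.

Lemma ord_pos n (i : 'I_n) : 0 < n.
Proof. exact: leq_ltn_trans (leq0n i) (ltn_ord i). Qed.

Definition rot n (k : nat) (i : 'I_n) : 'I_n :=
  Ordinal (ltn_pmod (i + k) (ord_pos i)).

Definition fmap n (k : nat) (D : {set 'I_n}) : ptrans n :=
  [ffun i => if i \in D then Some (rot k i) else None].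

Definition Aset n (k : nat) : {set 'I_n} := [set i : 'I_n | i + k < n].

Lemma modn_wrap n x : n <= x -> x < n + n -> x %% n = x - n.
Proof.
move=> h1 h2; rewrite -{1}(subnK h1) modnDr modn_small //; lia.
Qed.

Lemma rot_inj n (k : 'I_n) : injective (@rot n k).
Proof.
move=> i j /(congr1 val) /= /eqP; rewrite eqn_modDr !modn_small // => /eqP h.
exact: val_inj.
Qed.

Lemma L1 n (a : ptrans n) : a \in OCI n ->
  exists (k : 'I_n) D, a = fmap k D.
Proof.
rewrite inE => /andP[/andP[_ /existsP[k /forallP H]] _].
exists k, [set i | in_dom a i]; apply/ffunP => i.
rewrite ffunE inE /in_dom; move: (H i); rewrite /in_dom.
case: (a i) => [j|] //= /eqP hj; congr Some; exact: val_inj.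
Qed.

Lemma L2 n (k : 'I_n) (D : {set 'I_n}) :
  (fmap k D \in OCI n) = (D \subset Aset n k) || (D \subset ~: Aset n k).
Proof.
rewrite inE.
have -> : in_CI (fmap k D).
  apply/andP; split.
    apply/forallP=> i; apply/forallP=> j; apply/implyP.
    rewrite /in_dom !ffunE.
    case iD: (i \in D) => //=; case jD: (j \in D) => //=.
    move=> /eqP [] /eqP; rewrite eqn_modDr !modn_small // => /eqP h.
  apply/existsP; exists k; apply/forallP=> i; rewrite /in_dom ffunE.
  by case: (i \in D) => //=.
rewrite /=; apply/idP/idP.
  move=> H; apply/negPn/negP; rewrite negb_or.
  move=> /andP[/subsetPn[j jD jA] /subsetPn[i iD iB]].
  move: jA iB; rewrite !inE negbK -leqNgt => jA iA.
  have ij : i < j by lia.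
  have := implyP (forallP (forallP H i) j); rewrite /in_dom !ffunE iD jD /= ij /=.
  rewrite modn_small // modn_wrap //; last by have := ltn_ord j; have := ltn_ord k; lia.
  by move=> /(_ isT); have := ltn_ord j; lia.
case/orP => sub; apply/forallP=> i; apply/forallP=> j; apply/implyP;
  rewrite /in_dom !ffunE; case iD: (i \in D); case jD: (j \in D) => //= ij.
  have := subsetP sub i iD; have := subsetP sub j jD; rewrite !inE => hj hi.
  by rewrite !modn_small //; lia.
have := subsetP sub i iD; have := subsetP sub j jD; rewrite !inE -!leqNgt => hj hi.
have := ltn_ord j; have := ltn_ord i; have := ltn_ord k => ??? .
by rewrite !modn_wrap //; lia.
Qed.

Definition PSp n (p : prod 'I_n {set 'I_n}) : bool :=
  (snd p != set0) && ((snd p \subset Aset n (fst p)) || (snd p \subset ~: Aset n (fst p))).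
Definition PS n : {set prod 'I_n {set 'I_n}} := [set p | PSp p].

Lemma OCI_eq n : 0 < n ->
  OCI n = [ffun _ => None] |: [set fmap (nat_of_ord (fst p)) (snd p) | p in PS n].
Proof.
move=> hn; apply/setP => a; rewrite in_setU1; apply/idP/idP.
  move=> aO; have [k [D Ha]] := L1 aO; move: aO; rewrite Ha L2 => sub.
  case: (eqVneq D set0) => [D0|Dn].
    by apply/orP; left; rewrite D0; apply/eqP/ffunP=> i; rewrite !ffunE inE.
  by apply/orP; right; apply/imsetP; exists (k, D) => //; rewrite inE /PSp /= Dn sub.
case/orP => [/eqP -> | /imsetP[[k D] /= pP ->]].
  have -> : [ffun _ => None] = fmap (Ordinal hn) (set0 : {set 'I_n}).
    by apply/ffunP=> i; rewrite !ffunE inE.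
  by rewrite L2 sub0set.
by move: pP; rewrite inE /PSp /= => /andP[_ sub]; rewrite L2.
Qed.

Lemma card_OCI n : 0 < n -> #|OCI n| = 1 + #|PS n|.
Proof.
move=> hn; rewrite OCI_eq // cardsU1.
have -> : ([ffun _ => None] : ptrans n) \notin [set fmap (nat_of_ord (fst p)) (snd p) | p in PS n].
  apply/imsetP => -[[k D]].
  rewrite inE /PSp /= => /andP[/set0Pn[x xD] _] /ffunP /(_ x).
  by rewrite !ffunE xD.
rewrite card_in_imset //.
move=> [k D] [k' D']; rewrite !inE /= => /andP[/set0Pn[x xD] _] _ H.
have Hx := congr1 (fun f : ptrans n => f x) H; rewrite /= !ffunE xD in Hx.
case xD' : (x \in D') in Hx => //.
case: Hx => /eqP; rewrite eqn_modDl !modn_small // => /eqP kk.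
have kk' : k = k' by apply: val_inj.
subst k'; congr pair; apply/setP => i.
have := congr1 (fun f : ptrans n => f i) H; rewrite /= !ffunE.
by case: (i \in D); case: (i \in D').
Qed.

Lemma card_Aset n (k : 'I_n) : #|Aset n k| = n - k.
Proof.
have -> : n - k = \sum_(i < n - k) 1 by rewrite sum_nat_const card_ord muln1.
rewrite -sum1_card (big_ord_widen _ (fun _ => 1) (leq_subr k n)) big_mkcond /=.
rewrite [RHS]big_mkcond /=; apply: eq_bigr => i _; rewrite inE.
by have := ltn_ord k; case: ifP; case: ifP => //; lia.
Qed.

Lemma card_Bset n (k : 'I_n) : #|~: Aset n k| = k.
Proof.
have := cardsC (Aset n k); rewrite card_Aset card_ord.
by have := ltn_ord k; lia.
Qed.

Lemma card_inner n (A : {set 'I_n}) :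
  #|[set D : {set 'I_n} | (D != set0) && ((D \subset A) || (D \subset ~: A))]|
  = 2 ^ #|A| + 2 ^ #|~: A| - 2.
Proof.
have -> : [set D : {set 'I_n} | (D != set0) && ((D \subset A) || (D \subset ~: A))]
   = (powerset A :|: powerset (~: A)) :\ set0.
  by apply/setP => D; rewrite !inE ?powersetE.
have := cardsD1 set0 (powerset A :|: powerset (~: A)).
rewrite !inE ?powersetE sub0set /= cardsU !card_powerset.
have -> : powerset A :&: powerset (~: A) = [set set0].
  apply/setP => D; rewrite !inE ?powersetE -subsetI setICr subset0.
  by [].
rewrite cards1.
move: (2 ^ #|A|) (2 ^ #|~: A|) => x y; lia.
Qed.

Lemma card_PS n : #|PS n| = \sum_(k < n) (2 ^ (n - k) + 2 ^ k - 2).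
Proof.
pose F := fun (k : 'I_n) (D : {set 'I_n}) =>
   if (D != set0) && ((D \subset Aset n k) || (D \subset ~: Aset n k)) then 1 else 0.
rewrite -sum1_card big_mkcond /=.
transitivity (\sum_p F p.1 p.2).
  by apply: eq_bigr => -[k D] _; rewrite inE.
rewrite -(pair_bigA _ F) /=.
apply: eq_bigr => k _.
rewrite /F -big_mkcond sum1_card.
have := card_inner (Aset n k). rewrite card_Aset card_Bset.
move=> <-; apply: eq_card => D; by rewrite inE.
Qed.

Lemma sum_sub2 (G : nat -> nat) m : (forall k, 2 <= G k) ->
  \sum_(k < m) (G k - 2) + 2 * m = \sum_(k < m) G k.
Proof.
move=> hG.
have -> : 2 * m = \sum_(k < m) 2 by rewrite sum_nat_const card_ord mulnC.
rewrite -big_split /=; apply: eq_bigr => k _; rewrite subnK //.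
Qed.

Lemma geo1 m : \sum_(k < m) 2 ^ k = 2 ^ m - 1.
Proof.
elim: m => [|m IH]; first by rewrite big_ord0.
rewrite big_ord_recr /= IH expnS; have := expn_gt0 2 m; rewrite /=.
move: (2 ^ m) => x; lia.
Qed.

Lemma geo2 m : \sum_(k < m) 2 ^ (m - k) = 2 ^ m.+1 - 2.
Proof.
elim: m => [|m IH]; first by rewrite big_ord0.
rewrite big_ord_recl /=.
under eq_bigr => i _ do rewrite /bump leq0n add1n subSS.
rewrite IH subn0 !expnS; have := expn_gt0 2 m; rewrite /=.
move: (2 ^ m) => x; lia.
Qed.

Lemma two_le n k : 2 <= 2 ^ (n - k) + 2 ^ k.
Proof.
have h1 : 0 < 2 ^ (n - k) by rewrite expn_gt0.
have h2 : 0 < 2 ^ k by rewrite expn_gt0.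
move: h1 h2; move: (2 ^ (n - k)) (2 ^ k) => x y; lia.
Qed.

Theorem theorem1p4 (n : nat) : 1 <= n ->
  #|OCI n| = 3 * 2 ^ n - 2 * n - 2.
Proof.
move=> hn; rewrite card_OCI // card_PS.
have := @sum_sub2 (fun k => 2 ^ (n - k) + 2 ^ k) n (two_le n).
rewrite big_split /= geo1 geo2.
rewrite expnS; have : 0 < 2 ^ n by rewrite expn_gt0.
move: (\sum_(k < n) _) => y; move: (2 ^ n) => x; lia.
Qed.
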